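(* Let $(X,Y)$ be distributed according to an $(\alpha,\lambda)$-locally consistent RBM with $\alpha>0$. Fix an observed node $u\in V_{obs}$, a subset $S\subseteq V_{obs}\setminus\{u\}$, and a configuration $x_S\in\{\pm1\}^{S}$. Then for every $v\in N_2(u)\setminus(S\cup\{u\})$, \[ \mathrm{Cov}(u,v\mid X_S=x_S)\;\ge\;\alpha^2 e^{-12\lambda}. \]
   Context: A Restricted Boltzmann Machine (RBM) with $n$ observed variables $X\in\{\pm1\}^n$ (indexed by $V_{obs}=[n]$) and $m$ latent variables $Y\in\{\pm1\}^m$ (indexed by $V_{lat}=[m]$) is the distribution $\Pr[X=x,Y=y]=\frac1Z\exp(x^TJy+h^Tx+g^Ty)$, where $J\in\mathbb R^{n\times m}$, $h\in\mathbb R^n$, $g\in\mathbb R^m$ are arbitrary (no sign constraints on $h,g$) and $Z$ is the normalizing constant. Its edge set is $E=\{(i,j):J_{ij}\neq0\}$. The RBM is $(\alpha,\lambda)$-locally consistent if: (i) for each $j\in[m]$, either $J_{ij}\ge0$ for all $i$ or $J_{ij}\le0$ for all $i$; (ii) $|J_{ij}|\ge\alpha$ for every $(i,j)\in E$; (iii) $\sum_j|J_{ij}|+|h_i|\le\lambda$ for all $i\in[n]$; (iv) $\sum_i|J_{ij}|+|g_j|\le\lambda$ for all $j\in[m]$. For an observed node $u$, $N_2(u)=\{i\in V_{obs}:\exists j\in[m],\ J_{ij}\ne0,\ J_{uj}\neq0\}$ (two-hop neighborhood). For observed $u,v$ and $S\subseteq V_{obs}\setminus\{u,v\}$ with configuration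 $x_S$ of positive probability, $\mathrm{Cov}(u,v\mid X_S=x_S)=\mathbb E[X_uX_v\mid X_S=x_S]-\mathbb E[X_u\mid X_S=x_S]\,\mathbb E[X_v\mid X_S=x_S]$. *)

(* Defs.v *)
From Stdlib Require Import Reals.
From mathcomp Require Import all_boot.
Set Implicit Arguments. Unset Strict Implicit. Unset Printing Implicit Defensive.

Local Open Scope R_scope.

Definition spin (b : bool) : R := if b then 1 else -1.

Section RBM.
Variables (n m : nat).
Variables (J : 'I_n -> 'I_m -> R) (h : 'I_n -> R) (g : 'I_m -> R).

Definition obs_conf := {ffun 'I_n -> bool}.
Definition lat_conf := {ffun 'I_m -> bool}.

Definition rbm_energy (x : obs_conf) (y : lat_conf) : R :=
  \big[Rplus/R0]_(i < n) (\big[Rplus/R0]_(j < m) (spin (x i) * J i j * spin (y j)))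
  + \big[Rplus/R0]_(i < n) (h i * spin (x i))
  + \big[Rplus/R0]_(j < m) (g j * spin (y j)).

Definition rbm_Z : R :=
  \big[Rplus/R0]_(x : obs_conf) (\big[Rplus/R0]_(y : lat_conf) (exp (rbm_energy x y))).

Definition rbm_prob (x : obs_conf) (y : lat_conf) : R :=
  exp (rbm_energy x y) / rbm_Z.

Definition agrees (S : {set 'I_n}) (xS x : obs_conf) : bool :=
  [forall i in S, x i == xS i].

Definition prob_cond (S : {set 'I_n}) (xS : obs_conf) : R :=
  \big[Rplus/R0]_(x | agrees S xS x) (\big[Rplus/R0]_(y : lat_conf) (rbm_prob x y)).

Definition cond_exp (S : {set 'I_n}) (xS : obs_conf) (f : obs_conf -> R) : R :=
  (\big[Rplus/R0]_(x | agrees S xS x) (\big[Rplus/R0]_(y : lat_conf) (f x * rbm_prob x y)))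
  / prob_cond S xS.

Definition cond_cov (S : {set 'I_n}) (xS : obs_conf) (u v : 'I_n) : R :=
  cond_exp S xS (fun x => spin (x u) * spin (x v))
  - cond_exp S xS (fun x => spin (x u)) * cond_exp S xS (fun x => spin (x v)).

Definition locally_consistent (alpha lambda : R) : Prop :=
  (forall j : 'I_m, (forall i, 0 <= J i j) \/ (forall i, J i j <= 0)) /\
  (forall i j, J i j <> 0 -> alpha <= Rabs (J i j)) /\
  (forall i : 'I_n, (\big[Rplus/R0]_(j < m) Rabs (J i j)) + Rabs (h i) <= lambda) /\
  (forall j : 'I_m, (\big[Rplus/R0]_(i < n) Rabs (J i j)) + Rabs (g j) <= lambda).

Definition in_N2 (u v : 'I_n) : Prop :=
  exists j : 'I_m, J v j <> 0 /\ J u j <> 0.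

End RBM.

(* Main.v *)
From HB Require Import structures.
Require Import Defs.
From Stdlib Require Import Reals Lra Psatz.
From mathcomp Require Import all_boot.
Set Implicit Arguments. Unset Strict Implicit. Unset Printing Implicit Defensive.
Local Open Scope R_scope.

HB.instance Definition _ := Monoid.isComLaw.Build R R0 Rplus
  (fun x y z => esym (Rplus_assoc x y z)) Rplus_comm Rplus_0_l.

Notation "\rsum_ ( i | P ) F" := (\big[Rplus/R0]_(i | P) F)
  (at level 41, F at level 41, i at level 50).

Lemma rsum_le (I : finType) (P : pred I) (F G : I -> R) :
  (forall i, P i -> F i <= G i) -> \rsum_(i | P i) F i <= \rsum_(i | P i) G i.
Proof. move=> H; elim/big_rec2: _ => //; first lra. move=> i y1 y2 Pi Hy; have := H i Pi; lra. Qed.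

Lemma rsum_ge0 (I : finType) (P : pred I) (F : I -> R) :
  (forall i, P i -> 0 <= F i) -> 0 <= \rsum_(i | P i) F i.
Proof. move=> H; elim/big_rec: _ => //; first lra. move=> i y Pi Hy; have := H i Pi; lra. Qed.

Lemma rsum_split (I : finType) (P : pred I) (F G : I -> R) :
  \rsum_(i | P i) (F i + G i) = \rsum_(i | P i) F i + \rsum_(i | P i) G i.
Proof. exact: big_split. Qed.

Lemma rsum_mulr (I : finType) (P : pred I) (F : I -> R) c :
  \rsum_(i | P i) (F i * c) = (\rsum_(i | P i) F i) * c.
Proof. elim/big_rec2: _ => //; first lra. move=> i y1 y2 Pi ->; lra. Qed.

Lemma rsum_mull (I : finType) (P : pred I) (F : I -> R) c :
  \rsum_(i | P i) (c * F i) = c * (\rsum_(i | P i) F i).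
Proof. elim/big_rec2: _ => //; first lra. move=> i y1 y2 Pi ->; lra. Qed.

Lemma rsum_abs (I : finType) (P : pred I) (F : I -> R) :
  Rabs (\rsum_(i | P i) F i) <= \rsum_(i | P i) Rabs (F i).
Proof. elim/big_rec2: _ => //; first (rewrite Rabs_R0; lra).
move=> i y1 y2 Pi Hy; have H1 := Rabs_triang (F i) y2; lra. Qed.

Lemma rsum_pos (I : finType) (P : pred I) (F : I -> R) j :
  (forall i, P i -> 0 <= F i) -> P j -> 0 < F j -> 0 < \rsum_(i | P i) F i.
Proof. move=> H Pj Fj; rewrite (bigD1 j) //=.
have : 0 <= \rsum_(i | P i && (i != j)) F i by apply: rsum_ge0 => i /andP[]; auto.
lra. Qed.

Lemma div_nonneg (x a : R) : 0 <= x -> 0 < a -> 0 <= x / a.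
Proof. move=> hx ha; apply: Rmult_le_pos => //; left; exact: Rinv_0_lt_compat. Qed.

Lemma exp_le x y : x <= y -> exp x <= exp y.
Proof. case/Rle_lt_or_eq_dec => [/exp_increasing|->]; lra. Qed.

Section Lat.
Variables (I : finType) (o : I -> bool).
Implicit Types (A C : {set I}) (b p q : {ffun I -> bool}).
Definition jn (c a b : bool) := if c then a || b else a && b.
Definition mt (c a b : bool) := if c then a && b else a || b.
Definition join (p q : {ffun I -> bool}) := [ffun i => jn (o i) (p i) (q i)].
Definition meet (p q : {ffun I -> bool}) := [ffun i => mt (o i) (p i) (q i)].
Definition inD (A : {set I}) (b p : {ffun I -> bool}) :=
  [forall i, (i \notin A) ==> (p i == b i)].
Definition upd (p : {ffun I -> bool}) c s := [ffun i => if i == c then s else p i].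

Lemma inDP (A : {set I}) (b p : {ffun I -> bool}) : reflect (forall i, i \notin A -> p i = b i) (inD A b p).
Proof. apply: (iffP forallP) => H i; first by move=> Hi; move: (H i); rewrite Hi => /eqP.
by apply/implyP => /H ->. Qed.

Lemma join_comm p q : join p q = join q p.
Proof. apply/ffunP => i; rewrite !ffunE /jn; case: (o i); [exact: orbC|exact: andbC]. Qed.
Lemma joinxx p : join p p = p.
Proof. apply/ffunP => i; rewrite !ffunE /jn; case: (o i); case: (p i). all: by []. Qed.
Lemma meetxx p : meet p p = p.
Proof. apply/ffunP => i; rewrite !ffunE /mt; case: (o i); case: (p i). all: by []. Qed.
Lemma meet_absorb p q : meet p (join p q) = p.
Proof. apply/ffunP => i; rewrite !ffunE /mt /jn; case: (o i); case: (p i); case: (q i); by []. Qed.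
Lemma join_absorb p q : join p (join p q) = join p q.
Proof. apply/ffunP => i; rewrite !ffunE /jn; case: (o i); case: (p i); case: (q i); by []. Qed.

Lemma inD_join A b1 b2 p q : inD A b1 p -> inD A b2 q -> inD A (join b1 b2) (join p q).
Proof. move=> /inDP H1 /inDP H2; apply/inDP => i Hi; by rewrite !ffunE H1 // H2. Qed.
Lemma inD_meet A b1 b2 p q : inD A b1 p -> inD A b2 q -> inD A (meet b1 b2) (meet p q).
Proof. move=> /inDP H1 /inDP H2; apply/inDP => i Hi; by rewrite !ffunE H1 // H2. Qed.
Lemma inD_refl A p : inD A p p.
Proof. by apply/inDP. Qed.
Lemma inD_trans A C b p q : C \subset A -> inD (A :\: C) b p -> inD C p q -> inD A b q.
Proof. move=> sCA /inDP H1 /inDP H2; apply/inDP => i Hi.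
have HiC : i \notin C by apply: contra Hi; apply: (subsetP sCA).
rewrite H2 // H1 //; rewrite in_setD negb_and Hi orbT //. Qed.

Lemma sum_split A C b (F : {ffun I -> bool} -> R) : C \subset A ->
  \rsum_(p | inD A b p) F p =
  \rsum_(p | inD (A :\: C) b p) \rsum_(q | inD C p q) F q.
Proof.
move=> sCA.
pose pi (q : {ffun I -> bool}) := [ffun i => if i \in C then b i else q i].
rewrite (partition_big pi (fun p => inD (A :\: C) b p)).
  apply: eq_bigr => p Hp; apply: eq_bigl => q.
  apply/idP/idP.
    case/andP => _ /eqP <-; apply/inDP => i Hi; by rewrite ffunE (negbTE Hi).
  move=> Hq; rewrite (inD_trans sCA Hp Hq) /=; apply/eqP/ffunP => i.
  rewrite ffunE; case: ifP => Hi.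
    by move/inDP: Hp => ->; rewrite // in_setD Hi.
  by move/inDP: Hq => ->; rewrite ?Hi.
move=> q /inDP Hq; apply/inDP => i; rewrite ffunE in_setD negb_and negbK.
case: ifP => Hi //= HA; by rewrite Hq.
Qed.

Lemma sum_single c p (F : {ffun I -> bool} -> R) :
  \rsum_(q | inD [set c] p q) F q = F (upd p c true) + F (upd p c false).
Proof.
rewrite (bigD1 (upd p c true)); last first.
  by apply/inDP => i; rewrite in_set1 ffunE => /negbTE ->.
congr (_ + _); apply: big_pred1 => q /=; apply/idP/idP.
  case/andP => /inDP Hq Hne; apply/eqP/ffunP => i; rewrite ffunE.
  case: eqP => [->|/eqP Hi]; last by rewrite Hq // in_set1.
  case Hqc: (q c) => //; case/eqP: Hne; apply/ffunP => k; rewrite ffunE.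
  by case: eqP => [->|/eqP Hk]; rewrite ?Hqc ?Hq ?in_set1.
move/eqP => ->; apply/andP; split.
  by apply/inDP => i; rewrite in_set1 ffunE => /negbTE ->.
apply/negP => /eqP /ffunP /(_ c); rewrite !ffunE eqxx //.
Qed.

Lemma sum_empty p (F : {ffun I -> bool} -> R) :
  \rsum_(q | inD set0 p q) F q = F p.
Proof. apply: big_pred1 => q /=; apply/idP/idP.
  by move/inDP => H; apply/eqP/ffunP => i; rewrite H ?in_set0.
by move/eqP ->; apply: inD_refl. Qed.

Lemma upd_join p1 p2 c s t :
  join (upd p1 c s) (upd p2 c t) = upd (join p1 p2) c (jn (o c) s t).
Proof. apply/ffunP => i; rewrite !ffunE; case: eqP => [->|] //. Qed.
Lemma upd_meet p1 p2 c s t :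
  meet (upd p1 c s) (upd p2 c t) = upd (meet p1 p2) c (mt (o c) s t).
Proof. apply/ffunP => i; rewrite !ffunE; case: eqP => [->|] //. Qed.

Lemma four1 (a0 a1 b0 b1 c0 c1 d0 d1 : R) :
  0 <= a0 -> 0 <= a1 -> 0 <= b0 -> 0 <= b1 -> 0 <= c0 -> 0 <= c1 -> 0 <= d0 -> 0 <= d1 ->
  a0*b0 <= c0*d0 -> a0*b1 <= c1*d0 -> a1*b0 <= c1*d0 -> a1*b1 <= c1*d1 ->
  (a0+a1)*(b0+b1) <= (c0+c1)*(d0+d1).
Proof.
move=> ha0 ha1 hb0 hb1 hc0 hc1 hd0 hd1 H1 H2 H3 H4.
have HX : 0 <= c1 * d0 by nra.
case: (Rle_lt_or_eq_dec _ _ HX) => HX'.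
- have Hp : (a0*b1)*(a1*b0) <= (c0*d1)*(c1*d0).
    have -> : (a0*b1)*(a1*b0) = (a0*b0)*(a1*b1) by ring.
    have -> : (c0*d1)*(c1*d0) = (c0*d0)*(c1*d1) by ring.
    apply: Rmult_le_compat => //; nra.
  have Hq : (c1*d0 - a0*b1)*(c1*d0 - a1*b0) >= 0 by nra.
  have : (a0*b1 + a1*b0) * (c1*d0) <= (c1*d0 + c0*d1) * (c1*d0) by nra.
  move=> H5; have H6 : a0*b1 + a1*b0 <= c1*d0 + c0*d1.
    apply: (Rmult_le_reg_r (c1*d0)) => //.
  nra.
- have E1 : a0*b1 = 0 by nra.
  have E2 : a1*b0 = 0 by nra.
  nra.
Qed.

Definition AD (A : {set I}) := forall (b1 b2 : {ffun I -> bool}) (f1 f2 f3 f4 : {ffun I -> bool} -> R),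
  (forall p, 0 <= f1 p) -> (forall p, 0 <= f2 p) -> (forall p, 0 <= f3 p) -> (forall p, 0 <= f4 p) ->
  (forall p q, inD A b1 p -> inD A b2 q -> f1 p * f2 q <= f3 (join p q) * f4 (meet p q)) ->
  (\rsum_(p | inD A b1 p) f1 p) * (\rsum_(p | inD A b2 p) f2 p) <=
  (\rsum_(p | inD A (join b1 b2) p) f3 p) * (\rsum_(p | inD A (meet b1 b2) p) f4 p).

Lemma AD0 : AD set0.
Proof. move=> b1 b2 f1 f2 f3 f4 _ _ _ _ H; rewrite !sum_empty; apply: H; exact: inD_refl. Qed.

Lemma AD1 c : AD [set c].
Proof.
move=> b1 b2 f1 f2 f3 f4 h1 h2 h3 h4 H; rewrite !sum_single.
have Hu : forall p s, inD [set c] p (upd p c s).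
  by move=> p s; apply/inDP => i; rewrite in_set1 ffunE => /negbTE ->.
have HH : forall s t, f1 (upd b1 c s) * f2 (upd b2 c t) <=
     f3 (upd (join b1 b2) c (jn (o c) s t)) * f4 (upd (meet b1 b2) c (mt (o c) s t)).
  by move=> s t; rewrite -upd_join -upd_meet; apply: H.
move: (HH true true) (HH true false) (HH false true) (HH false false).
rewrite /jn /mt; case: (o c) => /= HTT HTF HFT HFF.
- rewrite (Rplus_comm (f1 _)) (Rplus_comm (f2 _)) (Rplus_comm (f3 _)) (Rplus_comm (f4 _)).
  by apply: four1.
- by apply: four1.
Qed.

Lemma AD_step A c : c \in A -> AD (A :\ c) -> AD A.
Proof.
move=> cA IH b1 b2 f1 f2 f3 f4 h1 h2 h3 h4 H.
have sCA : [set c] \subset A by rewrite sub1set.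
have E : A :\: [set c] = A :\ c by [].
rewrite !(sum_split _ _ sCA).
apply: IH; try (move=> p; apply: rsum_ge0 => q _; auto).
move=> p q Hp Hq; apply: AD1 => // p' q' Hp' Hq'; apply: H.
  exact: (inD_trans sCA Hp Hp').
exact: (inD_trans sCA Hq Hq').
Qed.

Lemma AD_all A : AD A.
Proof.
move: {2}#|A| (erefl #|A|) => k; elim: k A => [|k IHk] A HA.
  by move/eqP: HA; rewrite cards_eq0 => /eqP ->; apply: AD0.
have : (0 < #|A|)%N by rewrite HA.
case/card_gt0P => c cA; apply: (AD_step cA); apply: IHk.
by move: HA; rewrite (cardsD1 c) cA => [[]].
Qed.


Lemma div_le_div (x y a b : R) : 0 < a -> 0 < b -> x * b <= y * a -> x / a <= y / b.
Proof.
move=> ha hb H.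
have ex : x = (x / a) * a by field; lra.
have ey : y = (y / b) * b by field; lra.
rewrite ex ey in H.
have : (x / a) * (a * b) <= (y / b) * (a * b) by nra.
move=> H2; apply: (Rmult_le_reg_r (a*b)) => //; nra.
Qed.

Lemma FKG A b (w f g : {ffun I -> bool} -> R) :
  (forall p, 0 <= w p) -> (forall p, 0 <= f p) -> (forall p, 0 <= g p) ->
  (forall p q, inD A b p -> inD A b q -> w p * w q <= w (join p q) * w (meet p q)) ->
  (forall p q, inD A b p -> inD A b q -> f p <= f (join p q)) ->
  (forall p q, inD A b p -> inD A b q -> g p <= g (join p q)) ->
  (\rsum_(p | inD A b p) (w p * f p)) * (\rsum_(p | inD A b p) (w p * g p)) <=
  (\rsum_(p | inD A b p) (w p * f p * g p)) * (\rsum_(p | inD A b p) w p).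
Proof.
move=> hw hf hg Hw Hf Hg.
have := @AD_all A b b (fun p => w p * f p) (fun p => w p * g p) (fun p => w p * f p * g p) w.
rewrite joinxx meetxx; apply => //.
- by move=> p; apply: Rmult_le_pos.
- by move=> p; apply: Rmult_le_pos.
- by move=> p; apply: Rmult_le_pos; [apply: Rmult_le_pos|].
move=> p q Hp Hq.
have H1 := Hw p q Hp Hq; have H2 := Hf p q Hp Hq; have H3 := Hg q p Hq Hp.
rewrite join_comm in H3.
have H4 : f p * g q <= f (join p q) * g (join p q).
  by apply: Rmult_le_compat.
have H5 : (w p * w q) * (f p * g q) <= (w (join p q) * w (meet p q)) * (f (join p q) * g (join p q)).
  apply: Rmult_le_compat => //; apply: Rmult_le_pos => //.
nra.
Qed.

Lemma decomp A C b (mu f g : {ffun I -> bool} -> R) (kappa : R) :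
  C \subset A ->
  (forall p, 0 < mu p) -> (forall p, 0 <= f p) -> (forall p, 0 <= g p) ->
  (forall p q, mu p * mu q <= mu (join p q) * mu (meet p q)) ->
  (forall p q, f p <= f (join p q)) -> (forall p q, g p <= g (join p q)) ->
  (forall p, kappa * ((\rsum_(q | inD C p q) mu q) * (\rsum_(q | inD C p q) mu q)) <=
     (\rsum_(q | inD C p q) mu q) * (\rsum_(q | inD C p q) (mu q * f q * g q))
     - (\rsum_(q | inD C p q) (mu q * f q)) * (\rsum_(q | inD C p q) (mu q * g q))) ->
  kappa * ((\rsum_(p | inD A b p) mu p) * (\rsum_(p | inD A b p) mu p)) <=
  (\rsum_(p | inD A b p) mu p) * (\rsum_(p | inD A b p) (mu p * f p * g p))
  - (\rsum_(p | inD A b p) (mu p * f p)) * (\rsum_(p | inD A b p) (mu p * g p)).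
Proof.
move=> sCA hmu hf hg Hmu Hf Hg Hloc.
rewrite !(sum_split _ _ sCA).
set M := fun p => \rsum_(q | inD C p q) mu q.
set F := fun p => \rsum_(q | inD C p q) (mu q * f q).
set G := fun p => \rsum_(q | inD C p q) (mu q * g q).
set H := fun p => \rsum_(q | inD C p q) (mu q * f q * g q).
rewrite -/(M _) in Hloc.
have hmu0 : forall p, 0 <= mu p by move=> p; apply: Rlt_le.
have Mpos : forall p, 0 < M p.
  move=> p; apply: (rsum_pos (j := p)); [move=> q _; exact: hmu0|exact: inD_refl|exact: hmu].
have Fnn : forall p, 0 <= F p.
  by move=> p; apply: rsum_ge0 => q _; apply: Rmult_le_pos.
have Gnn : forall p, 0 <= G p.
  by move=> p; apply: rsum_ge0 => q _; apply: Rmult_le_pos.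
have Mono : forall (f0 : {ffun I -> bool} -> R), (forall p, 0 <= f0 p) ->
    (forall p q, f0 p <= f0 (join p q)) -> forall p q,
    (\rsum_(r | inD C p r) (mu r * f0 r)) / M p <=
    (\rsum_(r | inD C (join p q) r) (mu r * f0 r)) / M (join p q).
  move=> f0 hf0 Hf0 p q; apply: div_le_div => //.
  have := @AD_all C p (join p q) (fun r => mu r * f0 r) mu (fun r => mu r * f0 r) mu.
  rewrite join_absorb meet_absorb; apply => //.
  - by move=> r; apply: Rmult_le_pos.
  - by move=> r; apply: Rmult_le_pos.
  move=> r r' _ _.
  have H1 := Hmu r r'; have H2 := Hf0 r r'.
  have : (mu r * mu r') * f0 r <= (mu (join r r') * mu (meet r r')) * f0 (join r r').
    apply: Rmult_le_compat => //; apply: Rmult_le_pos => //.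
  nra.
have := @FKG (A :\: C) b M (fun p => F p / M p) (fun p => G p / M p).
have eF : forall p, M p * (F p / M p) = F p.
  by move=> p; field; have := Mpos p; lra.
have eG : forall p, M p * (G p / M p) = G p.
  by move=> p; field; have := Mpos p; lra.
move=> HF.
have {HF} HF := HF (fun p => Rlt_le _ _ (Mpos p))
  (fun p => div_nonneg (Fnn p) (Mpos p))
  (fun p => div_nonneg (Gnn p) (Mpos p)).
have HF2 := HF ltac:(move=> p q _ _; apply: (@AD_all C p q mu mu mu mu) => // r r' _ _; exact: Hmu).
have {HF2} HF3 := HF2 ltac:(move=> p q _ _; exact: (Mono f hf Hf p q))
   ltac:(move=> p q _ _; exact: (Mono g hg Hg p q)).
rewrite (eq_bigr _ (fun p _ => eF p)) (eq_bigr _ (fun p _ => eG p)) in HF3.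
have Hl : forall p, F p * G p / M p + kappa * M p <= H p.
  move=> p; have := Hloc p; have := Mpos p.
  rewrite -/(M p) -/(F p) -/(G p) -/(H p) => Mp Hp.
  apply: (Rmult_le_reg_l (M p)) => //.
  have -> : M p * (F p * G p / M p + kappa * M p) = F p * G p + kappa * (M p * M p) by field; lra.
  lra.
have HS : (\rsum_(p | inD (A :\: C) b p) (M p * (F p / M p) * (G p / M p))) + kappa * (\rsum_(p | inD (A :\: C) b p) M p)
   <= \rsum_(p | inD (A :\: C) b p) H p.
  rewrite -rsum_mull -rsum_split; apply: rsum_le => p _.
  have -> : M p * (F p / M p) * (G p / M p) = F p * G p / M p by field; have := Mpos p; lra.
  exact: Hl p.
have Z0 : 0 <= \rsum_(p | inD (A :\: C) b p) M p by apply: rsum_ge0 => p _; apply: Rlt_le.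
have HZ := Rmult_le_compat_l _ _ _ Z0 HS.
have eM : \rsum_(p | inD (A :\: C) b p) (\rsum_(q | inD C p q) mu q) = \rsum_(p | inD (A :\: C) b p) M p := erefl.
have eF1 : \rsum_(p | inD (A :\: C) b p) (\rsum_(q | inD C p q) (mu q * f q)) = \rsum_(p | inD (A :\: C) b p) F p := erefl.
have eG1 : \rsum_(p | inD (A :\: C) b p) (\rsum_(q | inD C p q) (mu q * g q)) = \rsum_(p | inD (A :\: C) b p) G p := erefl.
have eH1 : \rsum_(p | inD (A :\: C) b p) (\rsum_(q | inD C p q) (mu q * f q * g q)) = \rsum_(p | inD (A :\: C) b p) H p := erefl.
rewrite eM eF1 eG1 eH1.
move: HZ HF3; set X := \rsum_(p | _) (M p * (F p / M p) * (G p / M p)).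
set Z := \rsum_(p | _) M p. move=> HZ HF3.
have HF4 : (\rsum_(p | inD (A :\: C) b p) F p) * (\rsum_(p | inD (A :\: C) b p) G p) <= X * Z := HF3. clear HF3. move: HZ HF4; generalize (\rsum_(p | inD (A :\: C) b p) H p) (\rsum_(p | inD (A :\: C) b p) F p) (\rsum_(p | inD (A :\: C) b p) G p). move=> SH SF SG HZ HF3. nra.
Qed.

End Lat.

Definition sum3 (F : bool -> bool -> bool -> R) :=
  (F true true true + F false true true) + (F true false true + F false false true) +
  ((F true true false + F false true false) + (F true false false + F false false false)).

Definition phi (K Au Av B Ju Jv : R) (a b c : bool) :=
  exp (K + spin a * Au + spin b * Av + spin c * B + Ju * (spin a * spin c) + Jv * (spin b * spin c)).

Lemma exp_le' x y : x <= y -> exp x <= exp y.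
Proof. case/Rle_lt_or_eq_dec => [/exp_increasing|->]; lra. Qed.

Lemma sh_lb t : 0 <= t -> 4 * t * exp (-2 * t) <= exp (2 * t) - exp (- (2 * t)).
Proof.
move=> ht.
have e1 : exp (2 * t) = exp (-2 * t) * exp (4 * t) by rewrite -exp_plus; f_equal; ring.
have e2 : exp (- (2 * t)) = exp (-2 * t) by f_equal; ring.
rewrite e1 e2.
have := exp_ineq1_le (4 * t); have := exp_pos (-2 * t); nra.
Qed.

Lemma local_bound (K Au Av B Ju Jv lam alpha : R) :
  0 < alpha -> 0 <= lam -> Rabs Au + Rabs Ju <= lam -> Rabs Av + Rabs Jv <= lam ->
  Rabs B <= lam -> alpha <= Rabs Ju -> alpha <= Rabs Jv -> 0 <= Ju * Jv ->
  let F := phi K Au Av B Ju Jv in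
  alpha ^ 2 * exp (-12 * lam) * (sum3 F * sum3 F) <=
  sum3 F * sum3 (fun a b c => F a b c * (1 + spin a) * (1 + spin b))
  - sum3 (fun a b c => F a b c * (1 + spin a)) * sum3 (fun a b c => F a b c * (1 + spin b)).
Proof.
move=> ha hl HAu HAv HB HJu HJv HJJ F.
set D := (F true true true + F true true false) * (F false false true + F false false false)
       - (F true false true + F true false false) * (F false true true + F false true false).
have E1 : sum3 F * sum3 (fun a b c => F a b c * (1 + spin a) * (1 + spin b))
  - sum3 (fun a b c => F a b c * (1 + spin a)) * sum3 (fun a b c => F a b c * (1 + spin b)) = 4 * D.
  rewrite /sum3 /D /spin; ring.
rewrite E1.
have ED : D = exp (2 * K) * ((exp (2 * Ju) - exp (- (2 * Ju))) * (exp (2 * Jv) - exp (- (2 * Jv)))).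
  have T : forall a b c a' b' c' x, (K + spin a * Au + spin b * Av + spin c * B + Ju * (spin a * spin c) + Jv * (spin b * spin c)) +
     (K + spin a' * Au + spin b' * Av + spin c' * B + Ju * (spin a' * spin c') + Jv * (spin b' * spin c')) = x ->
     F a b c * F a' b' c' = exp x.
    move=> a b c a0 b0 c0 x <-. rewrite /F /phi. rewrite -exp_plus. by [].
  have e1 := T true true true false false true (2*K+2*B) ltac:(rewrite /spin; ring).
  have e2 := T true true true false false false (2*K+2*Ju+2*Jv) ltac:(rewrite /spin; ring).
  have e3 := T true true false false false true (2*K-2*Ju-2*Jv) ltac:(rewrite /spin; ring).
  have e4 := T true true false false false false (2*K-2*B) ltac:(rewrite /spin; ring).
  have e5 := T true false true false true true (2*K+2*B) ltac:(rewrite /spin; ring).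
  have e6 := T true false true false true false (2*K+2*Ju-2*Jv) ltac:(rewrite /spin; ring).
  have e7 := T true false false false true true (2*K-2*Ju+2*Jv) ltac:(rewrite /spin; ring).
  have e8 := T true false false false true false (2*K-2*B) ltac:(rewrite /spin; ring).
  have U : forall x y z, exp x * exp y * exp z = exp (x + y + z) by move=> x y z; rewrite !exp_plus.
  have r1 := U (2*K) (2*Ju) (2*Jv).
  have r2 := U (2*K) (2*Ju) (-(2*Jv)).
  have r3 := U (2*K) (-(2*Ju)) (2*Jv).
  have r4 := U (2*K) (-(2*Ju)) (-(2*Jv)).
  have q : forall x y, x = y -> exp x = exp y by move=> x y ->.
  rewrite (q (2*K + 2*Ju + - (2*Jv)) (2*K+2*Ju-2*Jv)) in r2; last ring.
  rewrite (q (2*K + - (2*Ju) + 2*Jv) (2*K-2*Ju+2*Jv)) in r3; last ring.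
  rewrite (q (2*K + - (2*Ju) + - (2*Jv)) (2*K-2*Ju-2*Jv)) in r4; last ring.
  rewrite /D.
  lra.
have shb : forall t, alpha <= t <= lam -> 4 * alpha * exp (-2 * lam) <= exp (2 * t) - exp (- (2 * t)).
  move=> t [h1 h2]; have := @sh_lb t ltac:(lra).
  have := @exp_le' (-2 * lam) (-2 * t) ltac:(lra).
  have := exp_pos (-2 * lam); nra.
have absJu : Rabs Ju <= lam by have := Rabs_pos Au; lra.
have absJv : Rabs Jv <= lam by have := Rabs_pos Av; lra.
have Hsh : 4 * alpha * exp (-2 * lam) * (4 * alpha * exp (-2 * lam)) <=
    (exp (2 * Ju) - exp (- (2 * Ju))) * (exp (2 * Jv) - exp (- (2 * Jv))).
  have hp : 0 <= 4 * alpha * exp (-2 * lam) by have := exp_pos (-2 * lam); nra.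
  case: (Rle_lt_dec 0 Ju) => hju.
  - have hju' : 0 < Ju by move: HJu; rewrite Rabs_right; lra.
    have hjv : 0 <= Jv by nra.
    rewrite Rabs_right in HJu absJu; last lra.
    rewrite Rabs_right in HJv absJv; last lra.
    apply: Rmult_le_compat => //; apply: shb; lra.
  - have hjv : Jv <= 0 by nra.
    rewrite Rabs_left in HJu absJu; last lra.
    rewrite Rabs_left1 in HJv absJv; last lra.
    have -> : (exp (2 * Ju) - exp (- (2 * Ju))) * (exp (2 * Jv) - exp (- (2 * Jv))) =
      (exp (2 * (-Ju)) - exp (- (2 * (-Ju)))) * (exp (2 * (-Jv)) - exp (- (2 * (-Jv)))).
      have -> : 2 * - Ju = - (2 * Ju) by ring.
      have -> : 2 * - Jv = - (2 * Jv) by ring.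
      rewrite !Ropp_involutive; ring.
    apply: Rmult_le_compat => //; apply: shb; lra.
have Fb : forall a b c, F a b c <= exp (K + 3 * lam).
  move=> a b c; rewrite /F /phi; apply: exp_le'.
  have := Rle_abs Au; have := Rle_abs (-Au); have := Rle_abs Av; have := Rle_abs (-Av);
  have := Rle_abs B; have := Rle_abs (-B); have := Rle_abs Ju; have := Rle_abs (-Ju);
  have := Rle_abs Jv; have := Rle_abs (-Jv); rewrite !Rabs_Ropp.
  case: a; case: b; case: c; rewrite /spin; lra.
have Fp : forall a b c, 0 < F a b c by move=> a b c; apply: exp_pos.
have M0 : 0 <= sum3 F by rewrite /sum3; have := Fp; move=> H; have := H true true true;
  have := H true true false; have := H true false true; have := H true false false;
  have := H false true true; have := H false true false; have := H false false true;
  have := H false false false; lra.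
have M1 : sum3 F <= 8 * exp (K + 3 * lam).
  rewrite /sum3; have := Fb true true true;
  have := Fb true true false; have := Fb true false true; have := Fb true false false;
  have := Fb false true true; have := Fb false true false; have := Fb false false true;
  have := Fb false false false; lra.
have M2 : sum3 F * sum3 F <= 64 * (exp (K + 3 * lam) * exp (K + 3 * lam)) by nra.
have E2 : exp (-12 * lam) * (exp (K + 3 * lam) * exp (K + 3 * lam)) = exp (2 * K) * exp (-6 * lam).
  rewrite -!exp_plus; f_equal; ring.
have E3 : exp (-2 * lam) * exp (-2 * lam) = exp (-4 * lam) by rewrite -exp_plus; f_equal; ring.
have E4 := @exp_le' (-6 * lam) (-4 * lam) ltac:(lra).
have ha2 : 0 <= alpha ^ 2 by nra.
have he : 0 <= exp (-12 * lam) by have := exp_pos (-12 * lam); lra.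
have hK := exp_pos (2 * K).
have S1 : alpha ^ 2 * exp (-12 * lam) * (sum3 F * sum3 F) <= 
   alpha ^ 2 * exp (-12 * lam) * (64 * (exp (K + 3 * lam) * exp (K + 3 * lam))).
  apply: Rmult_le_compat_l => //; nra.
have S2 : alpha ^ 2 * exp (-12 * lam) * (64 * (exp (K + 3 * lam) * exp (K + 3 * lam)))
   = 64 * alpha ^ 2 * (exp (2 * K) * exp (-6 * lam)) by rewrite -E2; ring.
have S3 : 64 * alpha ^ 2 * (exp (2 * K) * exp (-6 * lam)) <= 64 * alpha ^ 2 * (exp (2 * K) * exp (-4 * lam)).
  apply: Rmult_le_compat_l; first nra. apply: Rmult_le_compat_l; lra.
have S4 : 4 * D = 4 * exp (2 * K) * ((exp (2 * Ju) - exp (- (2 * Ju))) * (exp (2 * Jv) - exp (- (2 * Jv)))) by rewrite ED; ring.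
have S5 : 64 * alpha ^ 2 * (exp (2 * K) * exp (-4 * lam)) = 4 * exp (2 * K) * (4 * alpha * exp (-2 * lam) * (4 * alpha * exp (-2 * lam))).
  rewrite -E3; ring.
have S6 : 4 * exp (2 * K) * (4 * alpha * exp (-2 * lam) * (4 * alpha * exp (-2 * lam))) <= 
  4 * exp (2 * K) * ((exp (2 * Ju) - exp (- (2 * Ju))) * (exp (2 * Jv) - exp (- (2 * Jv)))).
  apply: Rmult_le_compat_l => //; lra.
lra.
Qed.

Section Gen.
Variables (I : finType) (o : I -> bool).
Implicit Types (C : {set I}) (p q r : {ffun I -> bool}).

Lemma sum_setU1 c C p (F : {ffun I -> bool} -> R) : c \notin C ->
  \rsum_(q | inD (c |: C) p q) F q =
  \rsum_(r | inD C p r) (F (upd r c true) + F (upd r c false)).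
Proof.
move=> cC.
have sub : [set c] \subset c |: C by rewrite sub1set setU11.
rewrite (sum_split _ _ sub).
have -> : (c |: C) :\: [set c] = C by rewrite setU1K.
by apply: eq_bigr => r _; rewrite sum_single.
Qed.

Lemma sum_three c1 c2 c3 p (F : {ffun I -> bool} -> R) :
  c1 != c2 -> c1 != c3 -> c2 != c3 ->
  \rsum_(q | inD (c1 |: (c2 |: [set c3])) p q) F q =
  sum3 (fun a b c => F (upd (upd (upd p c3 c) c2 b) c1 a)).
Proof.
move=> h12 h13 h23.
rewrite sum_setU1; last by rewrite !inE negb_or h12 h13.
rewrite (sum_setU1 (c:=c2) (C:=[set c3]) p (fun r => F (upd r c1 true) + F (upd r c1 false))); last by rewrite inE.
by rewrite sum_single /sum3.
Qed.
End Gen.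

Definition rleb (x y : R) : bool := if Rle_dec x y then true else false.
Lemma rlebP x y : reflect (x <= y) (rleb x y).
Proof. rewrite /rleb; case: Rle_dec => H; constructor => //. Qed.

Lemma spin_abs b : Rabs (spin b) = 1.
Proof. case: b; rewrite /spin ?Rabs_Ropp Rabs_R1 //. Qed.

Section Conc.
Variables (n m : nat) (J : 'I_n -> 'I_m -> R) (h : 'I_n -> R) (g : 'I_m -> R).
Definition Ity := ('I_n + 'I_m)%type.
Definition pos (j : 'I_m) := [forall i, rleb 0 (J i j)].
Definition ori (k : Ity) := match k with inl _ => true | inr j => pos j end.
Definition xof (q : {ffun Ity -> bool}) : obs_conf n := [ffun i => q (inl i)].
Definition yof (q : {ffun Ity -> bool}) : lat_conf m := [ffun j => q (inr j)].
Definition En q := rbm_energy J h g (xof q) (yof q).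

Hypothesis Hcol : forall j : 'I_m, (forall i, 0 <= J i j) \/ (forall i, J i j <= 0).

Lemma pos_sign j : (pos j -> forall i, 0 <= J i j) /\ (~~ pos j -> forall i, J i j <= 0).
Proof.
split; first by move/forallP => H i; apply/rlebP.
move=> Hn; case: (Hcol j) => // H; case/negP: Hn; apply/forallP => i; apply/rlebP; exact: H.
Qed.

Lemma cross_sm (c a b a' b' : bool) (x : R) :
  (c -> 0 <= x) -> (~~ c -> x <= 0) ->
  spin a * x * spin b + spin a' * x * spin b' <=
  spin (a || a') * x * spin (jn c b b') + spin (a && a') * x * spin (mt c b b').
Proof.
move=> H1 H2; rewrite /jn /mt; case: c H1 H2 => H1 H2.
- have := H1 erefl; case: a; case: b; case: a'; case: b'; rewrite /spin /=; lra.
- have := H2 erefl; case: a; case: b; case: a'; case: b'; rewrite /spin /=; lra.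
Qed.

Lemma lin_mod (c a a' : bool) (x : R) :
  x * spin a + x * spin a' = x * spin (jn c a a') + x * spin (mt c a a').
Proof. rewrite /jn /mt; case: c; case: a; case: a'; rewrite /spin /=; ring. Qed.

Lemma En_sm p q : En p + En q <= En (join ori p q) + En (meet ori p q).
Proof.
rewrite /En /rbm_energy.
set jp := join ori p q; set mp := meet ori p q.
have Ex : forall i, xof jp i = xof p i || xof q i by move=> i; rewrite !ffunE.
have Ex' : forall i, xof mp i = xof p i && xof q i by move=> i; rewrite !ffunE.
have Ey : forall j, yof jp j = jn (pos j) (yof p j) (yof q j) by move=> j; rewrite !ffunE.
have Ey' : forall j, yof mp j = mt (pos j) (yof p j) (yof q j) by move=> j; rewrite !ffunE.
have H1 : \big[Rplus/R0]_(i < n) \big[Rplus/R0]_(j < m) (spin (xof p i) * J i j * spin (yof p j))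
   + \big[Rplus/R0]_(i < n) \big[Rplus/R0]_(j < m) (spin (xof q i) * J i j * spin (yof q j)) <=
   \big[Rplus/R0]_(i < n) \big[Rplus/R0]_(j < m) (spin (xof jp i) * J i j * spin (yof jp j))
   + \big[Rplus/R0]_(i < n) \big[Rplus/R0]_(j < m) (spin (xof mp i) * J i j * spin (yof mp j)).
  rewrite -!rsum_split; apply: rsum_le => i _; rewrite -!rsum_split; apply: rsum_le => j _.
  rewrite Ex Ex' Ey Ey'; case: (pos_sign j) => P1 P2.
  apply: cross_sm; [exact: (fun H => P1 H i) | exact: (fun H => P2 H i)].
have H2 : \big[Rplus/R0]_(i < n) (h i * spin (xof p i)) + \big[Rplus/R0]_(i < n) (h i * spin (xof q i)) =
   \big[Rplus/R0]_(i < n) (h i * spin (xof jp i)) + \big[Rplus/R0]_(i < n) (h i * spin (xof mp i)).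
  rewrite -!rsum_split; apply: eq_bigr => i _; rewrite Ex Ex'; exact: (lin_mod true).
have H3 : \big[Rplus/R0]_(j < m) (g j * spin (yof p j)) + \big[Rplus/R0]_(j < m) (g j * spin (yof q j)) =
   \big[Rplus/R0]_(j < m) (g j * spin (yof jp j)) + \big[Rplus/R0]_(j < m) (g j * spin (yof mp j)).
  rewrite -!rsum_split; apply: eq_bigr => j _; rewrite Ey Ey'; exact: lin_mod.
lra.
Qed.

Section Dec.
Variables (u v : 'I_n) (j0 : 'I_m).
Hypothesis vu : v != u.

Definition K0 (x : obs_conf n) (y : lat_conf m) :=
  \big[Rplus/R0]_(i | (i != u) && (i != v)) \big[Rplus/R0]_(j | j != j0) (spin (x i) * J i j * spin (y j))
  + \big[Rplus/R0]_(i | (i != u) && (i != v)) (h i * spin (x i))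
  + \big[Rplus/R0]_(j | j != j0) (g j * spin (y j)).
Definition Aw (w : 'I_n) (y : lat_conf m) := \big[Rplus/R0]_(j | j != j0) (J w j * spin (y j)) + h w.
Definition B0 (x : obs_conf n) := \big[Rplus/R0]_(i | (i != u) && (i != v)) (J i j0 * spin (x i)) + g j0.

Lemma energy_dec x y : rbm_energy J h g x y =
  K0 x y + spin (x u) * Aw u y + spin (x v) * Aw v y + spin (y j0) * B0 x
  + J u j0 * (spin (x u) * spin (y j0)) + J v j0 * (spin (x v) * spin (y j0)).
Proof.
have rowj : forall w, \big[Rplus/R0]_(j < m) (spin (x w) * J w j * spin (y j)) =
   spin (x w) * J w j0 * spin (y j0) + spin (x w) * \big[Rplus/R0]_(j | j != j0) (J w j * spin (y j)).
  move=> w; rewrite (bigD1 j0) //=; congr (_ + _); rewrite -rsum_mull; apply: eq_bigr => j _; ring.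
have e1 : \big[Rplus/R0]_(i < n) \big[Rplus/R0]_(j < m) (spin (x i) * J i j * spin (y j)) =
   spin (x u) * J u j0 * spin (y j0) + spin (x u) * \big[Rplus/R0]_(j | j != j0) (J u j * spin (y j))
   + (spin (x v) * J v j0 * spin (y j0) + spin (x v) * \big[Rplus/R0]_(j | j != j0) (J v j * spin (y j)))
   + (\big[Rplus/R0]_(i | (i != u) && (i != v)) (J i j0 * spin (x i))) * spin (y j0)
   + \big[Rplus/R0]_(i | (i != u) && (i != v)) \big[Rplus/R0]_(j | j != j0) (spin (x i) * J i j * spin (y j)).
  rewrite (bigD1 u) //= (bigD1 v) //= !rowj.
  rewrite (eq_bigr (fun i => spin (x i) * J i j0 * spin (y j0) + \big[Rplus/R0]_(j | j != j0) (spin (x i) * J i j * spin (y j)))); last first.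
    move=> i _; rewrite (bigD1 j0) //.
  rewrite rsum_split -rsum_mulr.
  have -> : \big[Rplus/R0]_(i | (i != u) && (i != v)) (spin (x i) * J i j0 * spin (y j0)) =
     \big[Rplus/R0]_(i | (i != u) && (i != v)) (J i j0 * spin (x i) * spin (y j0)).
    by apply: eq_bigr => i _; ring.
  rewrite !Rplus_assoc; reflexivity.
have e2 : \big[Rplus/R0]_(i < n) (h i * spin (x i)) = h u * spin (x u) + (h v * spin (x v)
   + \big[Rplus/R0]_(i | (i != u) && (i != v)) (h i * spin (x i))).
  by rewrite (bigD1 u) //= (bigD1 v).
have e3 : \big[Rplus/R0]_(j < m) (g j * spin (y j)) = g j0 * spin (y j0) + \big[Rplus/R0]_(j | j != j0) (g j * spin (y j)).
  by rewrite (bigD1 j0).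
rewrite /rbm_energy e1 e2 e3 /K0 /Aw /B0; ring.
Qed.
Definition upd3 (p : {ffun Ity -> bool}) a b c :=
  upd (upd (upd p (inr j0) c) (inl v) b) (inl u) a.

Lemma xof_upd3 p a b c i : xof (upd3 p a b c) i =
  if i == u then a else if i == v then b else xof p i.
Proof. by rewrite /upd3 !ffunE /=. Qed.
Lemma yof_upd3 p a b c j : yof (upd3 p a b c) j = if j == j0 then c else yof p j.
Proof. by rewrite /upd3 !ffunE /=. Qed.

Lemma En_upd3 p a b c : exp (En (upd3 p a b c)) =
  phi (K0 (xof p) (yof p)) (Aw u (yof p)) (Aw v (yof p)) (B0 (xof p)) (J u j0) (J v j0) a b c.
Proof.
rewrite /En energy_dec /phi.
have ex : forall i, (i != u) && (i != v) -> xof (upd3 p a b c) i = xof p i.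
  by move=> i /andP[/negbTE H1 /negbTE H2]; rewrite xof_upd3 H1 H2.
have ey : forall j, j != j0 -> yof (upd3 p a b c) j = yof p j.
  by move=> j /negbTE H; rewrite yof_upd3 H.
have eK : K0 (xof (upd3 p a b c)) (yof (upd3 p a b c)) = K0 (xof p) (yof p).
  rewrite /K0; congr (_ + _ + _).
  - apply: eq_bigr => i Hi; apply: eq_bigr => j Hj; by rewrite ex // ey.
  - by apply: eq_bigr => i Hi; rewrite ex.
  - by apply: eq_bigr => j Hj; rewrite ey.
have eA : forall w, Aw w (yof (upd3 p a b c)) = Aw w (yof p).
  by move=> w; rewrite /Aw; congr (_ + _); apply: eq_bigr => j Hj; rewrite ey.
have eB : B0 (xof (upd3 p a b c)) = B0 (xof p).
  by rewrite /B0; congr (_ + _); apply: eq_bigr => i Hi; rewrite ex.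
rewrite eK !eA eB xof_upd3 eqxx xof_upd3 (negbTE vu) eqxx yof_upd3 eqxx.
f_equal; ring.
Qed.
Lemma fiber_eq p (F0 : {ffun Ity -> bool} -> R) (G : bool -> bool -> bool -> R) :
  (forall a b c, F0 (upd3 p a b c) = G a b c) ->
  \rsum_(q | inD (inl u |: (inl v |: [set inr j0])) p q) F0 q = sum3 G.
Proof.
move=> H; rewrite sum_three //; last by rewrite eq_sym.
by rewrite /sum3 !H.
Qed.

Lemma Aw_bound w y : Rabs (Aw w y) + Rabs (J w j0) <=
  \big[Rplus/R0]_(j < m) Rabs (J w j) + Rabs (h w).
Proof.
rewrite /Aw [X in _ <= X + _](bigD1 j0) //=.
have H1 := Rabs_triang (\big[Rplus/R0]_(j | j != j0) (J w j * spin (y j))) (h w).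
have H2 := rsum_abs (fun j => j != j0) (fun j => J w j * spin (y j)).
have H3 : \big[Rplus/R0]_(j | j != j0) Rabs (J w j * spin (y j)) = \big[Rplus/R0]_(j | j != j0) Rabs (J w j).
  by apply: eq_bigr => j _; rewrite Rabs_mult spin_abs Rmult_1_r.
rewrite H3 in H2.
have E : \big[Rplus/R0]_(j | j != j0) Rabs (J w j) = \big[Rplus/R0]_(i < m | i != j0) Rabs (J w i) by [].
have E2 : \big[Rplus/R0]_(j | j != j0) (J w j * spin (y j)) = \big[Rplus/R0]_(j < m | j != j0) (J w j * spin (y j)) by [].
rewrite -E -E2.
lra.
Qed.

Lemma B_bound x : Rabs (B0 x) <= \big[Rplus/R0]_(i < n) Rabs (J i j0) + Rabs (g j0).
Proof.
rewrite /B0 [X in _ <= X + _](bigD1 u) //= [X in _ <= _ + X + _](bigD1 v) //=.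
have H1 := Rabs_triang (\big[Rplus/R0]_(i | (i != u) && (i != v)) (J i j0 * spin (x i))) (g j0).
have H2 := rsum_abs (fun i => (i != u) && (i != v)) (fun i => J i j0 * spin (x i)).
have H3 : \big[Rplus/R0]_(i | (i != u) && (i != v)) Rabs (J i j0 * spin (x i)) =
   \big[Rplus/R0]_(i | (i != u) && (i != v)) Rabs (J i j0).
  by apply: eq_bigr => i _; rewrite Rabs_mult spin_abs Rmult_1_r.
rewrite H3 in H2.
have := Rabs_pos (J u j0); have := Rabs_pos (J v j0).
have E : \big[Rplus/R0]_(i | (i != u) && (i != v)) Rabs (J i j0) =
   \big[Rplus/R0]_(i < n | (i != u) && (i != v)) Rabs (J i j0) by [].
have E2 : \big[Rplus/R0]_(i | (i != u) && (i != v)) (J i j0 * spin (x i)) = \big[Rplus/R0]_(i < n | (i != u) && (i != v)) (J i j0 * spin (x i)) by [].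
rewrite -E -E2.
lra.
Qed.
End Dec.
End Conc.

Lemma sum_xy n m (P : pred (obs_conf n)) (F : obs_conf n -> lat_conf m -> R) :
  \big[Rplus/R0]_(x | P x) \big[Rplus/R0]_(y : lat_conf m) F x y =
  \big[Rplus/R0]_(q : {ffun Ity n m -> bool} | P (xof q)) F (xof q) (yof q).
Proof.
rewrite pair_big_dep.
pose k (xy : obs_conf n * lat_conf m) : {ffun Ity n m -> bool} :=
  [ffun z => match z with inl i => xy.1 i | inr j => xy.2 j end].
rewrite (reindex (fun q => (xof q, yof q))) /=.
  by apply: eq_bigl => q; rewrite andbT.
apply: onW_bij; exists k.
  move=> q; apply/ffunP; case => [i|j]; by rewrite !ffunE.
move=> [x y]; rewrite /xof /yof; congr pair; apply/ffunP => i; by rewrite !ffunE.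
Qed.

Unset Implicit Arguments.
Theorem lemma1 (n m : nat) (J : 'I_n -> 'I_m -> R) (h : 'I_n -> R) (g : 'I_m -> R)
  (alpha lambda : R) :
  0 < alpha ->
  locally_consistent J h g alpha lambda ->
  forall (u : 'I_n) (S : {set 'I_n}) (xS : obs_conf n),
  u \notin S ->
  forall v : 'I_n,
  in_N2 J u v -> v \notin S -> v <> u ->
  alpha ^ 2 * exp (-12 * lambda) <= cond_cov J h g S xS u v.
Proof.
move=> ha [Hcol [Hal [Hrow Hcs]]] u S xS uS v [j0 [Hv0 Hu0]] vS vu.
have vu' : v != u by apply/eqP.
pose A : {set Ity n m} := [set k | match k with inl i => i \notin S | inr _ => true end].
pose b : {ffun Ity n m -> bool} := [ffun k => match k with inl i => xS i | inr _ => false end].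
pose C : {set Ity n m} := inl u |: (inl v |: [set inr j0]).
pose mu := fun q => exp (En J h g q).
pose f := fun q : {ffun Ity n m -> bool} => 1 + spin (q (inl u)).
pose gg := fun q : {ffun Ity n m -> bool} => 1 + spin (q (inl v)).
have lam0 : 0 <= lambda.
  have := Hrow u; have := Rabs_pos (h u).
  have : 0 <= \big[Rplus/R0]_(j < m) Rabs (J u j) by apply: rsum_ge0 => j _; apply: Rabs_pos.
  lra.
have sub : C \subset A.
  by rewrite /C !subUset !sub1set !inE /= uS vS.
have mupos : forall p, 0 < mu p by move=> p; apply: exp_pos.
have fnn : forall p, 0 <= f p by move=> p; rewrite /f /spin; case: (p _); lra.
have gnn : forall p, 0 <= gg p by move=> p; rewrite /gg /spin; case: (p _); lra.
have msm : forall p q, mu p * mu q <= mu (join (ori J) p q) * mu (meet (ori J) p q).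
  by move=> p q; rewrite /mu -!exp_plus; apply: exp_le; apply: En_sm.
have fmono : forall p q, f p <= f (join (ori J) p q).
  move=> p q; rewrite /f ffunE /= /jn; case: (p (inl u)); case: (q (inl u)); rewrite /spin /=; lra.
have gmono : forall p q, gg p <= gg (join (ori J) p q).
  move=> p q; rewrite /gg ffunE /= /jn; case: (p (inl v)); case: (q (inl v)); rewrite /spin /=; lra.
have loc : forall p, alpha ^ 2 * exp (-12 * lambda) *
    ((\rsum_(q | inD C p q) mu q) * (\rsum_(q | inD C p q) mu q)) <=
     (\rsum_(q | inD C p q) mu q) * (\rsum_(q | inD C p q) (mu q * f q * gg q))
     - (\rsum_(q | inD C p q) (mu q * f q)) * (\rsum_(q | inD C p q) (mu q * gg q)).
  move=> p.
  set PHI := phi (K0 J h g u v j0 (xof p) (yof p)) (Aw J h j0 u (yof p)) (Aw J h j0 v (yof p))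
      (B0 J g u v j0 (xof p)) (J u j0) (J v j0).
  have eu : forall a b c, f (upd3 u v j0 p a b c) = 1 + spin a.
    by move=> a b' c; rewrite /f /upd3 !ffunE eqxx.
  have ev : forall a b c, gg (upd3 u v j0 p a b c) = 1 + spin b.
    move=> a b' c; rewrite /gg /upd3 !ffunE; case: eqP => [[E]|_]; [by move/eqP: vu'; rewrite E | by rewrite eqxx].
  rewrite (fiber_eq (p:=p) vu' (F0 := mu) (G := PHI)); last by move=> a b' c; exact: En_upd3.
  rewrite (fiber_eq (p:=p) vu' (F0 := fun q => mu q * f q * gg q)
     (G := fun a b c => PHI a b c * (1 + spin a) * (1 + spin b))); last first.
    move=> a b' c; cbv beta; rewrite (eu a b' c) (ev a b' c); congr (_ * _ * _); exact: En_upd3.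
  rewrite (fiber_eq (p:=p) vu' (F0 := fun q => mu q * f q)
     (G := fun a b c => PHI a b c * (1 + spin a))); last first.
    move=> a b' c; cbv beta; rewrite (eu a b' c); congr (_ * _); exact: En_upd3.
  rewrite (fiber_eq (p:=p) vu' (F0 := fun q => mu q * gg q)
     (G := fun a b c => PHI a b c * (1 + spin b))); last first.
    move=> a b' c; cbv beta; rewrite (ev a b' c); congr (_ * _); exact: En_upd3.
  have H1 : Rabs (Aw J h j0 u (yof p)) + Rabs (J u j0) <= lambda.
    exact: Rle_trans (Aw_bound J h j0 u (yof p)) (Hrow u).
  have H2 : Rabs (Aw J h j0 v (yof p)) + Rabs (J v j0) <= lambda.
    exact: Rle_trans (Aw_bound J h j0 v (yof p)) (Hrow v).
  have H3 : Rabs (B0 J g u v j0 (xof p)) <= lambda.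
    exact: Rle_trans (B_bound J g j0 vu' (xof p)) (Hcs j0).
  have H4 := Hal u j0 Hu0.
  have H5 := Hal v j0 Hv0.
  have H6 : 0 <= J u j0 * J v j0.
    by case: (Hcol j0) => H; have := H u; have := H v; nra.
  exact: (local_bound _ ha lam0 H1 H2 H3 H4 H5 H6).
have key := decomp b sub mupos fnn gnn msm fmono gmono loc.
have Zpos : 0 < rbm_Z J h g.
  rewrite /rbm_Z; apply: (rsum_pos (j := [ffun => true])) => //.
  - by move=> x _; apply: rsum_ge0 => y _; apply: Rlt_le; apply: exp_pos.
  - apply: (rsum_pos (j := [ffun => true])) => //; last exact: exp_pos.
    by move=> y _; apply: Rlt_le; apply: exp_pos.
have Z0pos : 0 < \rsum_(q | inD A b q) mu q.
  apply: (rsum_pos (j := b)); [by move=> q _; apply: Rlt_le | exact: inD_refl | exact: mupos].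
have ag : forall q, agrees S xS (xof q) = inD A b q.
  move=> q; apply/idP/idP.
  - move/forallP => H; apply/inDP; case => [i|j]; rewrite inE /= ?negbK // => Hi.
    by rewrite ffunE; have := H i; rewrite Hi /= ffunE => /eqP.
  - move/inDP => H; apply/forallP => i; apply/implyP => Hi; rewrite ffunE; apply/eqP.
    by have := H (inl i); rewrite inE /= Hi ffunE; apply.
have ce : forall F0, cond_exp J h g S xS F0 =
    (\rsum_(q | inD A b q) (F0 (xof q) * mu q)) / (\rsum_(q | inD A b q) mu q).
  move=> F0; rewrite /cond_exp /prob_cond /rbm_prob.
  rewrite (sum_xy (fun x => agrees S xS x) (fun x y => F0 x * (exp (rbm_energy J h g x y) / rbm_Z J h g))).
  rewrite (sum_xy (fun x => agrees S xS x) (fun x y => exp (rbm_energy J h g x y) / rbm_Z J h g)).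
  rewrite (eq_bigl _ _ ag) (eq_bigl _ _ ag).
  rewrite (eq_bigr (fun q => (F0 (xof q) * mu q) * / rbm_Z J h g)); last first.
    by move=> q _; rewrite /mu /En /Rdiv; ring.
  rewrite [X in _ / X](eq_bigr (fun q => mu q * / rbm_Z J h g)); last first.
    by move=> q _; rewrite /mu /En /Rdiv; ring.
  rewrite !rsum_mulr.
  have E : forall (x y z : R), z <> 0 -> y <> 0 -> x * / z / (y * / z) = x / y.
    by move=> x y z hz hy; field; split.
  rewrite E; [reflexivity | lra | exact: (Rgt_not_eq _ _ Z0pos)].
rewrite /cond_cov !ce; cbv beta.
have hl1 : forall mm a : R, mm * (1 + a) = mm + a * mm by move=> *; ring.
have hl2 : forall mm a b0 : R, mm * (1 + a) * (1 + b0) = mm + a * mm + b0 * mm + a * b0 * mm by move=> *; ring.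
have e1 : \rsum_(q | inD A b q) (mu q * f q) = \rsum_(q | inD A b q) mu q + \rsum_(q | inD A b q) (spin (xof q u) * mu q).
  rewrite -rsum_split; apply: eq_bigr => q _; rewrite /f /xof ffunE; apply: hl1.
have e2 : \rsum_(q | inD A b q) (mu q * gg q) = \rsum_(q | inD A b q) mu q + \rsum_(q | inD A b q) (spin (xof q v) * mu q).
  rewrite -rsum_split; apply: eq_bigr => q _; rewrite /gg /xof ffunE; apply: hl1.
have e3 : \rsum_(q | inD A b q) (mu q * f q * gg q) = \rsum_(q | inD A b q) mu q + \rsum_(q | inD A b q) (spin (xof q u) * mu q)
   + \rsum_(q | inD A b q) (spin (xof q v) * mu q) + \rsum_(q | inD A b q) (spin (xof q u) * spin (xof q v) * mu q).
  rewrite -!rsum_split; apply: eq_bigr => q _; rewrite /f /gg /xof !ffunE; apply: hl2.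
rewrite e1 e2 e3 in key.
have key2 : alpha ^ 2 * exp (-12 * lambda) * ((\rsum_(q | inD A b q) mu q) * (\rsum_(q | inD A b q) mu q)) <=
  (\rsum_(q | inD A b q) mu q) * (\rsum_(q | inD A b q) mu q + \rsum_(q | inD A b q) (spin (xof q u) * mu q)
   + \rsum_(q | inD A b q) (spin (xof q v) * mu q) + \rsum_(q | inD A b q) (spin (xof q u) * spin (xof q v) * mu q))
  - (\rsum_(q | inD A b q) mu q + \rsum_(q | inD A b q) (spin (xof q u) * mu q)) *
    (\rsum_(q | inD A b q) mu q + \rsum_(q | inD A b q) (spin (xof q v) * mu q)) := key.
clear key.
move: key2 Z0pos.
generalize (\rsum_(q | inD A b q) mu q) (\rsum_(q | inD A b q) (spin (xof q u) * mu q))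
  (\rsum_(q | inD A b q) (spin (xof q v) * mu q)) (\rsum_(q | inD A b q) (spin (xof q u) * spin (xof q v) * mu q)).
move=> Z0 S1 S2 S12 key Z0p.
have -> : S12 / Z0 - S1 / Z0 * (S2 / Z0) = (Z0 * S12 - S1 * S2) / (Z0 * Z0) by field; lra.
have Zs : 0 < Z0 * Z0 by nra.
have -> : alpha ^ 2 * exp (-12 * lambda) = (alpha ^ 2 * exp (-12 * lambda)) / 1 by field.
apply: (@div_le_div _ _ 1 (Z0 * Z0)); [lra | exact: Zs | nra].
Qed.
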